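(* Let $p$ be a prime, $q=p^m$, and $f:\mathbb{F}_q\to\mathbb{F}_p$ a function with $f(0)=0$ and $f(ax)=f(x)$ for all $a\in\mathbb{F}_p^*$, $x\in\mathbb{F}_q$. Let $I=f(\mathbb{F}_q^* )$. Then the partition $P=\{D^*_{f,i}\}_{i\in I}$ of $\mathbb{F}_q^*$ induces an $|I|$-class association scheme $(\mathbb{F}_q,\{R_i\}_{i\in I})$ if and only if $|I|=|\{W_f(\beta):\beta\in\mathbb{F}_q^*\}|$.
   Context: $\mathrm{Tr}$ is the absolute trace $\mathbb{F}_q\to\mathbb{F}_p$, $\zeta_p=e^{2\pi\sqrt{-1}/p}$, $W_f(\beta)=\sum_{x\in\mathbb{F}_q}\zeta_p^{f(x)-\mathrm{Tr}(\beta x)}$. For $i\in\mathbb{F}_p$, $D_{f,i}=\{x\in\mathbb{F}_q:f(x)=i\}$, $D^*_{f,i}=D_{f,i}\setminus\{0\}$, $I=\{f(x):x\ne0\}$. Relations on $\mathbb{F}_q$: the diagonal $R_{-1}$ and, for $i\in I$, $(\alpha,\beta)\in R_i$ iff $\alpha-\beta\in D^*_{f,i}$. The partition induces an $|I|$-class association scheme if these relations form a symmetric association scheme on $\mathbb{F}_q$ (each relation symmetric, and for any three relations $R_a,R_b,R_c$ the number $|\{w:(u,w)\in R_a,(w,v)\in R_b\}|$ is constant over $(u,v)\in R_c$). *)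

(* Defs.v *)
From HB Require Import structures.
From mathcomp Require Import all_boot all_order all_algebra all_field.
Set Implicit Arguments. Unset Strict Implicit. Unset Printing Implicit Defensive.
Import Order.TTheory GRing.Theory Num.Theory.
Local Open Scope ring_scope.

(* zeta_p = exp(2 pi i / p) in algC: by the documented choice of n.-root
   (minimal nonnegative argument), p.-root (-1) = exp(i pi / p). *)
Definition zeta_p (p : nat) : algC := (p.-root (-1)) ^+ 2.

(* Absolute trace F_q -> F_p, q = p^m: the unique a in F_p whose image in F
   equals sum_{i<m} x^(p^i) (this sum lies in the prime field). *)
Definition abs_trace (p : nat) (F : finFieldType) (m : nat) (x : F) : 'F_p :=
  odflt 0 [pick a : 'F_p | ((a : nat)%:R : F) == \sum_(i < m) x ^+ (p ^ i)].

Definition walsh (p : nat) (F : finFieldType) (m : nat) (f : F -> 'F_p)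
  (beta : F) : algC :=
  \sum_(x : F) zeta_p p ^+ (nat_of_ord (f x - abs_trace p m (beta * x))%R).

Definition image_set (p : nat) (F : finFieldType) (f : F -> 'F_p) : {set 'F_p} :=
  [set f x | x in [set y : F | y != 0]].

(* Relations: None is the diagonal R_{-1}; Some i is R_i. *)
Definition scheme_rel (p : nat) (F : finFieldType) (f : F -> 'F_p)
  (k : option 'F_p) : rel F :=
  fun a b => match k with
             | None => a == b
             | Some i => (a - b != 0) && (f (a - b) == i)
             end.

Definition scheme_index (p : nat) (F : finFieldType) (f : F -> 'F_p)
  : {set option 'F_p} :=
  None |: [set Some i | i in image_set f].

Definition is_sym_assoc_scheme (X K : finType) (J : {set K}) (R : K -> rel X)
  : Prop :=
  [/\ (forall x y, exists k, [/\ k \in J, R k x y &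
          forall k', k' \in J -> R k' x y -> k' = k]),
      (exists2 k0, k0 \in J & forall x y, R k0 x y = (x == y)),
      (forall k, k \in J -> exists x y, R k x y),
      (forall k, k \in J -> forall x y, R k x y = R k y x) &
      (forall a b c, a \in J -> b \in J -> c \in J ->
         exists n : nat, forall u v, R c u v ->
           #|[set w | R a u w && R b w v]| = n)].

(* Main.v *)
Require Import Defs.
From HB Require Import structures.
From mathcomp Require Import all_boot all_order all_algebra all_field.
From mathcomp Require Import zify.
Import GRing.Theory Num.Theory.
Local Open Scope ring_scope.

Section Zeta.
Variable p : nat.
Hypothesis hp : prime p.

Lemma p_gt1 : (1 < p)%N. Proof. exact: prime_gt1. Qed.

Lemma zeta_root : (p.-root (-1 : algC)) ^+ p = -1.
Proof. by rewrite rootCK // prime_gt0. Qed.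

Lemma zeta_p_exp : zeta_p p ^+ p = 1.
Proof. by rewrite /zeta_p -exprM mulnC exprM zeta_root expr2 mulrNN mulr1. Qed.

Lemma zeta_p_neq1 : zeta_p p != 1.
Proof.
rewrite /zeta_p; set z := p.-root (-1 : algC).
apply/eqP => h.
have : (z - 1) * (z + 1) = 0 by rewrite -subr_sqr h expr1n subrr.
move/eqP; rewrite mulf_eq0 => /orP[|].
  rewrite subr_eq0 => /eqP z1.
  have := zeta_root; rewrite -/z z1 expr1n => /eqP.
  by rewrite -subr_eq0 opprK (_ : 1 + 1 = 2%:R) // pnatr_eq0.
rewrite addr_eq0 => /eqP zm1.
have := rootC_lt0 (-1 : algC) p_gt1; rewrite -/z zm1.
by rewrite oppr_lt0 ltr01.
Qed.

Lemma zeta_prim : p.-primitive_root (zeta_p p).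
Proof.
have [n pn ndvd] := prim_order_exists (prime_gt0 hp) zeta_p_exp.
have := hp; case/primeP => _ /(_ n ndvd) /= /orP[/eqP n1|/eqP np]; last by move: pn; rewrite np.
by move: pn; rewrite n1 => /prim_expr_order; rewrite expr1 => /eqP; rewrite (negbTE zeta_p_neq1).
Qed.

Definition ep (a : 'F_p) : algC := zeta_p p ^+ (a : nat).

Lemma Fp_lt (a : 'F_p) : ((a : nat) < p)%N.
Proof. by case: a => /= a; rewrite Fp_cast. Qed.

Lemma sum_Fp (G : nat -> algC) : \sum_(a : 'F_p) G (a : nat) = \sum_(i < p) G i.
Proof.
by rewrite -(big_mkord xpredT) Fp_cast // big_mkord.
Qed.

Lemma ep_add a b : ep (a + b) = ep a * ep b.
Proof.
rewrite /ep -exprD.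
have -> : (((a + b)%R : 'F_p) : nat) = (((a : nat) + b) %% p)%N.
  by rewrite /=; move: (a : nat) (b : nat) => x y; rewrite Fp_cast.
by rewrite expr_mod // zeta_p_exp.
Qed.

Lemma ep0 : ep 0 = 1.
Proof. by rewrite /ep expr0. Qed.

Lemma ep_eq1 a : (ep a == 1) = (a == 0).
Proof.
rewrite /ep -(prim_order_dvd zeta_prim).
apply/idP/eqP => [|->]; last by rewrite dvdn0.
move=> /dvdn_leq h; apply/val_inj => /=.
case: (a : nat) h (Fp_lt a) => // n /(_ isT) h1 h2.
by move: (leq_ltn_trans h1 h2); rewrite ltnn.
Qed.

Lemma sum_ep : \sum_(a : 'F_p) ep a = 0.
Proof.
rewrite /ep (sum_Fp (fun i => zeta_p p ^+ i)).
have h := subrX1 (zeta_p p) p; rewrite zeta_p_exp subrr in h.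
by move/eqP: h; rewrite eq_sym mulf_eq0 subr_eq0 (negbTE zeta_p_neq1) => /eqP.
Qed.

Lemma sum_ep_mul c : c != 0 -> \sum_(a : 'F_p) ep (a * c) = 0.
Proof.
move=> nz.
have := @reindex_inj _ _ 0 'F_p _ xpredT ep (mulIf nz).
by move=> h; rewrite -h sum_ep.
Qed.

End Zeta.

Section Trace.
Variables (p : nat) (F : finFieldType) (m : nat).
Hypotheses (hp : prime p) (hchar : p \in [pchar F]) (hq : #|F| = (p ^ m)%N).

Definition iotaF (a : 'F_p) : F := ((a : nat)%:R : F).

Lemma Fp_valD (a b : 'F_p) : (((a + b)%R : 'F_p) : nat) = (((a : nat) + b) %% p)%N.
Proof. by rewrite /=; move: (a : nat) (b : nat) => x y; rewrite Fp_cast. Qed.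

Lemma Fp_valM (a b : 'F_p) : (((a * b)%R : 'F_p) : nat) = (((a : nat) * b) %% p)%N.
Proof. by rewrite /=; move: (a : nat) (b : nat) => x y; rewrite Fp_cast. Qed.

Lemma Fp_val1 : (((1%R : 'F_p)) : nat) = 1%N.
Proof. by rewrite /= Fp_cast // modn_small // prime_gt1. Qed.

Lemma iota_add a b : iotaF (a + b) = iotaF a + iotaF b.
Proof. by rewrite /iotaF Fp_valD (GRing.natr_mod_pchar hchar) natrD. Qed.

Lemma iota_mul a b : iotaF (a * b) = iotaF a * iotaF b.
Proof. by rewrite /iotaF Fp_valM (GRing.natr_mod_pchar hchar) natrM. Qed.

Lemma iota0 : iotaF 0 = 0.
Proof. by []. Qed.

Lemma iota1 : iotaF 1 = 1.
Proof. by rewrite /iotaF Fp_val1. Qed.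

Lemma iotaN1 : iotaF (-1) = -1.
Proof.
apply/eqP; rewrite -subr_eq0 opprK -iota1 -iota_add addNr.
by [].
Qed.

Lemma iota_inj : injective iotaF.
Proof.
have key : forall a b : 'F_p, ((a : nat) <= b)%N -> iotaF a = iotaF b -> a = b.
  move=> a b le_ab h.
  have : ((b : nat)%:R - (a : nat)%:R : F) == 0 by rewrite /iotaF in h; rewrite h subrr.
  rewrite -natrB // -(dvdn_pcharf hchar).
  have ltp : (b - a < p)%N := leq_ltn_trans (leq_subr _ _) (@Fp_lt p hp b).
  case: (posnP (b - a)) => [/eqP|pos].
    by rewrite subn_eq0 => le_ba _; apply/val_inj/eqP; rewrite eqn_leq le_ab le_ba.
  by move=> /(dvdn_leq pos) h1; move: (leq_ltn_trans h1 ltp); rewrite ltnn.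
move=> a b; case: (leqP (a : nat) b) => [le|/ltnW le]; first exact: key.
by move=> h; symmetry; apply: key.
Qed.

Lemma iota_exp a n : iotaF (a ^+ n) = iotaF a ^+ n.
Proof.
elim: n => [|n IH]; first by rewrite !expr0 iota1.
by rewrite !exprS iota_mul IH.
Qed.

Lemma iota_frob a : iotaF a ^+ p = iotaF a.
Proof. by rewrite -iota_exp; congr iotaF; have := expf_card a; rewrite card_Fp. Qed.

Lemma iota_frob_pow a i : iotaF a ^+ (p ^ i) = iotaF a.
Proof.
elim: i => [|i IH]; first by rewrite expn0 expr1.
by rewrite expnSr exprM IH iota_frob.
Qed.

Lemma powp_add i (x y : F) : (x + y) ^+ (p ^ i) = x ^+ (p ^ i) + y ^+ (p ^ i).
Proof.
apply: exprDn_pchar; rewrite pnatX; apply/orP; left.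
by rewrite pnatE.
Qed.

Definition tr (x : F) : F := \sum_(i < m) x ^+ (p ^ i).

Lemma tr_add x y : tr (x + y) = tr x + tr y.
Proof. by rewrite /tr -big_split /=; apply: eq_bigr => i _; rewrite powp_add. Qed.

Lemma tr_scal a x : tr (iotaF a * x) = iotaF a * tr x.
Proof.
rewrite /tr mulr_sumr; apply: eq_bigr => i _.
by rewrite exprMn iota_frob_pow.
Qed.

Lemma tr_frob x : tr x ^+ p = tr x.
Proof.
have -> : tr x ^+ p = Frobenius_aut hchar (tr x) by rewrite pFrobenius_autE.
rewrite /tr rmorph_sum /=.
under eq_bigr do rewrite pFrobenius_autE -exprM -expnSr.
have h := big_ord_recr m (fun i : 'I_m.+1 => x ^+ (p ^ i)).
have h2 := big_ord_recl m (fun i : 'I_m.+1 => x ^+ (p ^ i)).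
rewrite /= in h h2.
rewrite -hq expf_card in h.
rewrite expn0 expr1 in h2.
have : x + \sum_(i < m) x ^+ (p ^ i.+1) = \sum_(i < m) x ^+ (p ^ i) + x.
  by rewrite -h2 h.
by move=> /eqP; rewrite addrC (inj_eq (addIr x)) => /eqP.
Qed.

Lemma tr_in x : exists a, iotaF a = tr x.
Proof.
suff /existsP[a /eqP ha] : [exists a, iotaF a == tr x] by exists a.
apply: contraT => /existsPn none.
pose P : {poly F} := 'X^p - 'X.
have sP : size P = p.+1.
  rewrite /P size_addl ?size_polyXn // size_opp size_polyX ltnS.
  exact: prime_gt1.
have nzP : P != 0 by rewrite -size_poly_eq0 sP.
have := max_poly_roots nzP (rs := tr x :: map iotaF (enum 'F_p)).
rewrite /= size_map -cardE card_Fp // sP ltnn.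
have rootP y : y ^+ p = y -> root P y.
  by move=> hy; rewrite /root /P !hornerE hy subrr.
rewrite rootP ?tr_frob //=.
have -> : all (root P) (map iotaF (enum 'F_p)).
  by apply/allP => y /mapP [a _ ->]; rewrite rootP // iota_frob.
rewrite (map_inj_uniq iota_inj) enum_uniq andbT /=.
have -> : tr x \notin map iotaF (enum 'F_p).
  by apply/negP => /mapP [a _ ha]; move: (none a); rewrite ha eqxx.
by apply.
Qed.

Lemma Tr_spec x : iotaF (abs_trace p (F := F) m x) = tr x.
Proof.
rewrite /abs_trace; case: pickP => [a /eqP //|none].
have [a ha] := tr_in x; move: (none a); rewrite /iotaF in ha; rewrite ha /tr eqxx.
by [].
Qed.

Lemma Tr_add x y : abs_trace p (F := F) m (x + y) = abs_trace p (F := F) m x + abs_trace p (F := F) m y.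
Proof. by apply: iota_inj; rewrite iota_add !Tr_spec tr_add. Qed.

Lemma Tr_scal a x : abs_trace p (F := F) m (iotaF a * x) = a * abs_trace p (F := F) m x.
Proof. by apply: iota_inj; rewrite iota_mul !Tr_spec tr_scal. Qed.

Lemma Tr0 : abs_trace p (F := F) m 0 = 0.
Proof. by apply: iota_inj; rewrite Tr_spec iota0 /tr; apply: big1 => i _; rewrite expr0n eqn0Ngt expn_gt0 prime_gt0. Qed.

Lemma TrN x : abs_trace p (F := F) m (- x) = - abs_trace p (F := F) m x.
Proof. by apply/eqP; rewrite -subr_eq0 opprK -Tr_add addNr Tr0. Qed.

Lemma Tr_nz : exists y, abs_trace p (F := F) m y != 0.
Proof.
suff /existsP[y hy] : [exists y, abs_trace p (F := F) m y != 0] by exists y.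
apply: contraT => /existsPn all0.
have m_gt0 : (0 < m)%N.
  case: m hq => // h1; have := card_finNzRing_gt1 F; rewrite h1 expn0 ltnn //.
pose P : {poly F} := \sum_(i < m) 'X^(p ^ i).
have hroot y : root P y.
  move: (all0 y); rewrite negbK => /eqP h.
  by rewrite /root /P horner_sum; under eq_bigr do rewrite hornerXn; rewrite -/(tr y) -Tr_spec h.
have c1 : P`_1 = 1.
  rewrite /P coef_sum (bigD1 (Ordinal m_gt0)) //= coefXn expn0 eqxx big1 ?addr0 // => i hi.
  rewrite coefXn; case: eqP => // h.
  have i0 : (i : nat) != 0%N by move: hi; apply: contra => /eqP e; apply/eqP/val_inj.
  by have := ltn_exp2l 0 i (prime_gt1 hp); rewrite expn0 -h lt0n i0 ltnn.
have nzP : P != 0 by apply/eqP => h; move: c1; rewrite h coef0 => /eqP; rewrite eq_sym oner_eq0.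
have := max_poly_roots nzP (rs := enum F).
rewrite enum_uniq -cardE hq.
have -> : all (root P) (enum F) by apply/allP => y _; exact: hroot.
move=> /(_ isT isT) lt.
have : (size P <= (p ^ m.-1).+1)%N.
  apply: leq_trans (size_sum _ _ _) _; apply/bigmax_leqP => i _.
  rewrite size_polyXn ltnS leq_pexp2l ?prime_gt0 //.
  by rewrite -ltnS prednK.
move=> /(leq_trans lt); rewrite ltnS.
rewrite -{1}(prednK m_gt0) expnS.
have pos : (0 < p ^ m.-1)%N by rewrite expn_gt0 prime_gt0.
have := prime_gt1 hp; move: (p ^ m.-1)%N pos => k kpos pg1 h.
nia.
Qed.

End Trace.

Section Abstract.
Variables (G : finZmodType) (K : finType) (cls : G -> K) (chi : G -> G -> algC).
Hypotheses (chiD : forall b x y, chi b (x + y) = chi b x * chi b y)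
  (chiC : forall b x, chi b x = chi x b)
  (chi0 : forall b, chi b 0 = 1)
  (chi_orth : forall b, \sum_x chi b x = if b == 0 then #|G|%:R else 0)
  (cls0 : forall x, (cls x == cls 0) = (x == 0)).

Local Notation q := (#|G|%:R : algC).

Lemma q_neq0 : q != 0.
Proof. by rewrite pnatr_eq0 -lt0n; apply/card_gt0P; exists 0. Qed.

Lemma inv_gen (g : G -> algC) z :
  \sum_b (\sum_x g x * chi b x) * chi b (- z) = q * g z.
Proof.
under eq_bigr do rewrite mulr_suml.
rewrite exchange_big /=.
under eq_bigr => x _.
  under eq_bigr do rewrite -mulrA -chiD chiC.
  rewrite -mulr_sumr chi_orth subr_eq0.
  over.
rewrite (bigD1 z) //= eqxx big1 ?addr0; first by rewrite mulrC.
by move=> x /negbTE ->; rewrite mulr0.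
Qed.

Definition lamf k b : algC := \sum_x (cls x == k)%:R * chi b x.

Lemma inv_lam k z : \sum_b lamf k b * chi b (- z) = q * (cls z == k)%:R.
Proof. exact: (inv_gen (fun x => (cls x == k)%:R)). Qed.

Definition Nf a b z : algC := \sum_w ((cls (z - w) == a) && (cls w == b))%:R.

Lemma conv a b β : \sum_z Nf a b z * chi β z = lamf a β * lamf b β.
Proof.
rewrite /Nf; under eq_bigr do rewrite mulr_suml.
rewrite exchange_big /= /lamf mulrC mulr_suml; apply: eq_bigr => w _.
rewrite (reindex_inj (addIr w)) /= mulr_sumr; apply: eq_bigr => u _.
rewrite addrK chiD -mulnb natrM.
by rewrite mulrACA mulrC.
Qed.

Lemma sum_lam β : \sum_k lamf k β = \sum_x chi β x.
Proof.
rewrite /lamf exchange_big /=; apply: eq_bigr => x _.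
rewrite (bigD1 (cls x)) //= eqxx mul1r big1 ?addr0 // => k /negbTE.
by rewrite eq_sym => ->; rewrite mul0r.
Qed.

Lemma lam_cls0 β : lamf (cls 0) β = 1.
Proof.
rewrite /lamf (bigD1 0) //= eqxx mul1r chi0 big1 ?addr0 // => x.
by rewrite cls0 => /negbTE ->; rewrite mul0r.
Qed.

Definition J : {set K} := [set cls x | x in G].

Lemma lamf_notJ k β : k \notin J -> lamf k β = 0.
Proof.
move=> kJ; apply: big1 => x _; case: eqP => [e|]; last by rewrite mul0r.
by move: kJ; rewrite -e imset_f.
Qed.

Definition V := {ffun G -> algC^o}.
Definition lam k : V := [ffun b => lamf k b].
Definition Sig b : {ffun K -> algC} := [ffun k => lamf k b].
Definition Sigs := undup [seq Sig b | b <- enum G].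
Definition ind s : V := [ffun b => ((Sig b == s)%:R : algC)].
Definition Xl := [seq lam k | k <- enum J].
Definition Yl := [seq ind s | s <- Sigs].
Definition fmul (u v : V) : V := [ffun b => u b * v b].

Lemma free_test (X : seq V) :
  (forall i, (i < size X)%N -> exists w : G -> algC,
     forall j, (j < size X)%N -> \sum_b w b * X`_j b = (i == j)%:R) -> free X.
Proof.
move=> h; rewrite -[X]/(tval (in_tuple X)); apply/freeP => k hk i.
have [w hw] := h i (ltn_ord i).
have : \sum_b w b * (\sum_(j < size X) k j *: (in_tuple X)`_j) b = 0.
  by rewrite hk; apply: big1 => b _; rewrite ffunE mulr0.
under eq_bigr do rewrite sum_ffunE mulr_sumr.
rewrite exchange_big /=.
under eq_bigr => j _.
  under eq_bigr do rewrite ffunE mulrCA.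
  rewrite -mulr_sumr /= hw //.
  over.
rewrite (bigD1 i) //= eqxx mulr1 big1 ?addr0 // => j /negbTE ij.
by move: ij; rewrite eq_sym -val_eqE /= => ->; rewrite mulr0.
Qed.

Lemma size_Xl : size Xl = #|J|.
Proof. by rewrite size_map -cardE. Qed.

Lemma Xl_nth i : (i < size Xl)%N ->
  Xl`_i = lam (nth (cls 0) (enum J) i) /\ nth (cls 0) (enum J) i \in J.
Proof.
rewrite size_map => hi; split; first by rewrite (nth_map (cls 0)).
by rewrite -mem_enum mem_nth.
Qed.

Lemma Xl_free : free Xl.
Proof.
apply: free_test => i hi.
have [_ ] := Xl_nth i hi; move=> /imsetP [x _ hx].
exists (fun b => chi b (- x) / q) => j hj.
have [-> _] := Xl_nth j hj.
under eq_bigr do rewrite ffunE mulrC mulrA.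
rewrite -mulr_suml inv_lam mulrAC divff ?q_neq0 // mul1r -hx.
rewrite size_map in hi hj.
by rewrite (nth_uniq _ hi hj (enum_uniq _)).
Qed.

Lemma Sigs_nth i : (i < size Sigs)%N -> exists β, nth (Sig 0) Sigs i = Sig β.
Proof.
move=> hi; have := mem_nth (Sig 0) hi; rewrite mem_undup => /mapP [β _ ->].
by exists β.
Qed.

Lemma Yl_free : free Yl.
Proof.
apply: free_test => i hi; rewrite size_map in hi.
have [β hβ] := Sigs_nth i hi.
exists (fun b => (b == β)%:R) => j hj; rewrite size_map in hj.
rewrite (bigD1 β) //= eqxx mul1r big1 ?addr0; last first.
  by move=> b /negbTE ->; rewrite mul0r.
rewrite (nth_map (Sig 0)) // ffunE -hβ.
by rewrite (nth_uniq _ hi hj (undup_uniq _)).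
Qed.

Lemma const_in_Y (g : V) : (forall b c, Sig b = Sig c -> g b = g c) -> g \in <<Yl>>%VS.
Proof.
move=> hg.
pose c b : algC := #|[pred c | Sig c == Sig b]|%:R.
have cnz b : c b != 0.
  by rewrite pnatr_eq0 -lt0n; apply/card_gt0P; exists b; rewrite inE.
have -> : g = \sum_b (g b / c b) *: ind (Sig b).
  apply/ffunP => γ; rewrite sum_ffunE.
  under eq_bigr do rewrite !ffunE.
  rewrite (eq_bigr (fun b => if Sig b == Sig γ then g γ / c γ else 0)); last first.
    move=> b _; rewrite -[_ *: _]/(_ * _) eq_sym; case: eqP => [e|_]; last by rewrite mulr0.
    rewrite mulr1 (hg _ _ e) /c.
    by congr (_ / _%:R); apply: eq_card => x; rewrite !inE e.
  rewrite -big_mkcond sumr_const.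
  have -> : #|[pred b | Sig b == Sig γ]| = #|[pred c | Sig c == Sig γ]| by [].
  by rewrite -mulr_natr -/(c γ) mulrC mulrCA divff ?mulr1.
apply: rpred_sum => b _; apply: rpredZ; apply: memv_span.
by apply: map_f; rewrite mem_undup; apply: map_f; rewrite mem_enum.
Qed.

Lemma Xl_sub_Yl : (<<Xl>> <= <<Yl>>)%VS.
Proof.
apply/span_subvP => v /mapP [k _ ->]; apply: const_in_Y => b c h.
by rewrite !ffunE; have := congr1 (fun s : {ffun K -> algC} => s k) h; rewrite !ffunE.
Qed.

Lemma J_le_E : (#|J| <= size Sigs)%N.
Proof.
rewrite -size_Xl -(eqnP Xl_free).
apply: leq_trans (dimvS Xl_sub_Yl) _.
by apply: leq_trans (dim_span _) _; rewrite size_map.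
Qed.


Lemma ffZ (c : algC) (u : V) b : (c *: u) b = c * u b.
Proof. by rewrite ffunE. Qed.

Lemma scC (a : algC) (b : algC^o) : a *: b = a * b.
Proof. by []. Qed.

Lemma inv_in_X (v : V) : v \in <<Xl>>%VS -> forall z z', cls z = cls z' ->
  \sum_b v b * chi b (- z) = \sum_b v b * chi b (- z').
Proof.
move=> hv0 z z' e.
have hv := coord_span (X := in_tuple Xl) hv0.
have [c {}hv] : exists c : 'I_(size Xl) -> algC, v = \sum_i c i *: (in_tuple Xl)`_i.
  by exists (fun i => coord (in_tuple Xl) i v).
have key y : \sum_b v b * chi b (- y) =
    \sum_(i < size Xl) c i * (q * (cls y == nth (cls 0) (enum J) i)%:R).
  rewrite hv; under eq_bigr do rewrite sum_ffunE mulr_suml.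
  rewrite exchange_big /=; apply: eq_bigr => i _.
  under eq_bigr do rewrite ffZ -mulrA.
  rewrite -mulr_sumr; congr (_ * _).
  have [-> _] := Xl_nth i (ltn_ord i).
  under eq_bigr do rewrite ffunE.
  exact: inv_lam.
by rewrite !key e.
Qed.

Lemma E_to_S5 : size Sigs = #|J| ->
  forall a b, a \in J -> b \in J -> forall z z', cls z = cls z' -> Nf a b z = Nf a b z'.
Proof.
move=> hE a b aJ bJ z z' e.
have eqXY : <<Xl>>%VS = <<Yl>>%VS.
  apply/eqP; rewrite eqEdim Xl_sub_Yl /= (eqnP Xl_free) size_Xl -hE.
  by apply: leq_trans (dim_span _) _; rewrite size_map.
have hm : fmul (lam a) (lam b) \in <<Xl>>%VS.
  rewrite eqXY; apply: const_in_Y => β γ h; rewrite !ffunE.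
  by have := congr1 (fun s : {ffun K -> algC} => (s a, s b)) h; rewrite !ffunE => -[-> ->].
have := @inv_in_X _ hm _ _ e.
have Nk y : \sum_β fmul (lam a) (lam b) β * chi β (- y) = q * Nf a b y.
  under eq_bigr do rewrite !ffunE -conv.
  exact: (inv_gen (Nf a b)).
by rewrite !Nk => /(mulfI q_neq0).
Qed.

Definition one : V := lam (cls 0).

Lemma oneE β : one β = 1.
Proof. by rewrite ffunE lam_cls0. Qed.

Lemma lam_in k : lam k \in <<Xl>>%VS.
Proof.
case kJ : (k \in J); first by apply: memv_span; apply: map_f; rewrite mem_enum.
have -> : lam k = 0 by apply/ffunP => β; rewrite !ffunE lamf_notJ ?kJ.
exact: rpred0.
Qed.

Lemma one_in : one \in <<Xl>>%VS.
Proof. exact: lam_in. Qed.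

Lemma fmul_suml (I : Type) (r : seq I) (c : I -> algC) (g : I -> V) v :
  fmul (\sum_(i <- r) c i *: g i) v = \sum_(i <- r) c i *: fmul (g i) v.
Proof.
apply/ffunP => β; rewrite !ffunE !sum_ffunE mulr_suml; apply: eq_bigr => i _.
by rewrite !ffunE -[c i *: g i β]/(c i * g i β) -[c i *: (g i β * v β)]/(c i * (g i β * v β)) mulrA.
Qed.

Lemma fmulC u v : fmul u v = fmul v u.
Proof. by apply/ffunP => β; rewrite !ffunE mulrC. Qed.

Lemma fmul_sumr (I : Type) (r : seq I) (c : I -> algC) (g : I -> V) v :
  fmul v (\sum_(i <- r) c i *: g i) = \sum_(i <- r) c i *: fmul v (g i).
Proof. by rewrite fmulC fmul_suml; apply: eq_bigr => i _; rewrite fmulC. Qed.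

Section S5.
Hypothesis hS5 : forall a b, a \in J -> b \in J -> forall z z', cls z = cls z' -> Nf a b z = Nf a b z'.

Definition rep k : G := odflt 0 [pick x | cls x == k].

Lemma rep_spec k : k \in J -> cls (rep k) = k.
Proof.
move=> /imsetP [x _ ->]; rewrite /rep; case: pickP => [y /eqP //|/(_ x)].
by rewrite eqxx.
Qed.

Lemma prod_lam a b : a \in J -> b \in J -> fmul (lam a) (lam b) \in <<Xl>>%VS.
Proof.
move=> aJ bJ.
have -> : fmul (lam a) (lam b) = \sum_(k <- enum J) Nf a b (rep k) *: lam k.
  apply/ffunP => β; rewrite !ffunE -conv sum_ffunE.
  transitivity (\sum_z \sum_(k <- enum J) (cls z == k)%:R * (Nf a b (rep k) * chi β z)).
    apply: eq_bigr => z _; rewrite big_enum /= (bigD1 (cls z)) ?imset_f //= eqxx mul1r.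
    rewrite big1 ?addr0.
      by rewrite (hS5 _ _ aJ bJ z (rep (cls z))) // rep_spec ?imset_f.
    by move=> k /andP[_ /negbTE]; rewrite eq_sym => ->; rewrite mul0r.
  rewrite exchange_big /=; apply: eq_bigr => k _.
  rewrite !ffunE -[_ *: _]/(_ * _) /lamf mulr_sumr; apply: eq_bigr => z _.
  by rewrite mulrCA.
by apply: rpred_sum => k _; apply: rpredZ; apply: lam_in.
Qed.

Lemma closure u v : u \in <<Xl>>%VS -> v \in <<Xl>>%VS -> fmul u v \in <<Xl>>%VS.
Proof.
move=> /coord_span -> /coord_span hv.
rewrite fmul_suml; apply: rpred_sum => i _; apply: rpredZ.
rewrite hv fmul_sumr; apply: rpred_sum => j _; apply: rpredZ.
have [-> iJ] := Xl_nth i (eq_ind_r (fun n => (i < n)%N) (ltn_ord i) size_Xl).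
have [-> jJ] := Xl_nth j (eq_ind_r (fun n => (j < n)%N) (ltn_ord j) size_Xl).
exact: prod_lam.
Qed.

Lemma ind_in_X s : s \in Sigs -> ind s \in <<Xl>>%VS.
Proof.
rewrite mem_undup => /mapP [β0 _ ->] {s}; set s := Sig β0.
pose h γ : V := if [pick k | Sig γ k != s k] is Some k
  then (s k - Sig γ k)^-1 *: (lam k - Sig γ k *: one) else one.
have h_in γ : h γ \in <<Xl>>%VS.
  rewrite /h; case: pickP => [k _|_]; last exact: one_in.
  by apply: rpredZ; apply: rpredB; [apply: lam_in | apply: rpredZ; apply: one_in].
pose P := foldr fmul one (map h (enum G)).
have P_in : P \in <<Xl>>%VS.
  rewrite /P; elim: (enum G) => [|γ r IH] /=; first exact: one_in.
  exact: closure.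
have PE β : P β = \prod_(γ <- enum G) h γ β.
  rewrite /P; elim: (enum G) => [|γ r IH] /=; first by rewrite big_nil oneE.
  by rewrite big_cons ffunE IH.
have -> : ind s = P; last exact: P_in.
apply/ffunP => β; rewrite PE ffunE.
case: (eqVneq (Sig β) s) => [e|ne].
  symmetry; apply: big1_seq => γ _; rewrite /h.
  case: pickP => [k hk|_]; last exact: oneE.
  rewrite !ffunE lam_cls0 !scC mulr1.
  have -> : lamf k β = s k by rewrite -e ffunE.
  rewrite /s ffunE mulVf //.
  by move: hk; rewrite subr_eq0 eq_sym /s !ffunE.
rewrite (bigD1_seq β) ?mem_enum ?enum_uniq //= /h.
case: pickP => [k hk|none].
  by rewrite !ffunE lam_cls0 !scC mulr1 subrr mulr0 mul0r.
by case/eqP: ne; apply/ffunP => k; apply/eqP; move: (none k) => /negbFE.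
Qed.

Lemma S5_to_E : size Sigs = #|J|.
Proof.
apply/eqP; rewrite eqn_leq J_le_E andbT.
have YX : (<<Yl>> <= <<Xl>>)%VS.
  by apply/span_subvP => y /mapP [s sin ->]; exact: ind_in_X.
have := dimvS YX; rewrite (eqnP Yl_free) size_map => hle.
by apply: leq_trans hle _; apply: leq_trans (dim_span _) _; rewrite size_Xl.
Qed.

End S5.

Theorem abstract_main :
  (forall a b, a \in J -> b \in J -> forall z z', cls z = cls z' -> Nf a b z = Nf a b z')
  <-> size Sigs = #|J|.
Proof. by split; [exact: S5_to_E | exact: E_to_S5]. Qed.

End Abstract.
Section Cyc.
Variable p : nat.
Hypothesis hp : prime p.

Lemma cyc_nat (s : nat -> rat) :
  \sum_(j < p) ratr (s j) * zeta_p p ^+ j = 0 ->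
  forall j, (j < p)%N -> s j = s p.-1.
Proof.
move=> h.
set z := zeta_p p in h *.
have pS : p = p.-1.+1 by rewrite prednK ?prime_gt0.
pose Q : {poly rat} := \poly_(j < p.-1) (s j - s p.-1).
have zsum : \sum_(j < p) z ^+ j = 0.
  have h1 := subrX1 z p; rewrite (zeta_p_exp p hp) subrr in h1.
  by move/eqP: h1; rewrite eq_sym mulf_eq0 subr_eq0 (negbTE (zeta_p_neq1 p hp)) => /eqP.
have hQ : (map_poly ratr Q).[z] = 0.
  rewrite (@horner_coef_wide _ p.-1); last first.
    by rewrite size_map_inj_poly ?rmorph0 //; [apply: size_poly | apply: fmorph_inj].
  rewrite (eq_bigr (fun i : 'I_p.-1 => ratr (s i) * z ^+ i - ratr (s p.-1) * z ^+ i)); last first.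
    by move=> i _; rewrite coef_map /Q coef_poly ltn_ord GRing.raddfB mulrBl.
  rewrite GRing.sumrB -mulr_sumr.
  move: h zsum; rewrite pS !big_ord_recr /= => h zsum.
  have e1 : \sum_(i < p.-1) ratr (s i) * z ^+ i = - (ratr (s p.-1) * z ^+ p.-1).
    by apply/eqP; rewrite -subr_eq0 opprK h.
  have e2 : \sum_(i < p.-1) z ^+ i = - z ^+ p.-1.
    by apply/eqP; rewrite -subr_eq0 opprK zsum.
  by rewrite e1 e2 mulrN opprK addNr.
have Q0 : Q = 0.
  apply: contraTeq isT => nzQ.
  have [mp [Dmp _] dv] := minCpolyP z.
  have : (mp %| Q)%R by rewrite -dv /root hQ.
  move=> /(dvdp_leq nzQ).
  have : size mp = p.
    have := minCpoly_cyclotomic (zeta_prim p hp); rewrite Dmp => e.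
    have := size_cyclotomic z p; rewrite -e size_map_inj_poly ?rmorph0 //.
      by rewrite totient_prime // -pS.
    exact: fmorph_inj.
  move=> ->; have : (size Q <= p.-1)%N by apply: size_poly.
  move=> h1 h2; have := leq_trans h2 h1; rewrite {1}pS ltnn.
  by [].
move=> j jp; case: (ltnP j p.-1) => [jlt|jge].
  have := congr1 (fun P : {poly rat} => P`_j) Q0.
  by rewrite /Q coef_poly jlt coef0 => /eqP; rewrite subr_eq0 => /eqP.
by have -> : j = p.-1 by move: jp; rewrite {1}pS ltnS => jle; apply/eqP; rewrite eqn_leq jle jge.
Qed.

Lemma cyc_Fp (r : 'F_p -> algC) :
  (forall i, r i \in Crat) ->
  \sum_i ep p i * r i = 0 -> \sum_i r i = 0 -> forall i, r i = 0.
Proof.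
move=> rQ h1 h2.
pose RR (j : nat) : algC := r (inZp j).
have rRR (i : 'F_p) : r i = RR i by rewrite /RR valZpK.
pose s j := getCrat (RR j).
have sE j : ratr (s j) = RR j by rewrite /s getCratK // /RR rQ.
have h1' : \sum_(j < p) ratr (s j) * zeta_p p ^+ j = 0.
  rewrite -(sum_Fp p hp (fun j => ratr (s j) * zeta_p p ^+ j)) -[RHS]h1.
  by apply: eq_bigr => i _; rewrite sE -rRR mulrC.
have hs := @cyc_nat s h1'.
have h2' : \sum_(j < p) RR j = 0.
  by rewrite -(sum_Fp p hp RR) -[RHS]h2; apply: eq_bigr => i _; rewrite rRR.
have : \sum_(j < p) RR j = p%:R * RR p.-1.
  rewrite (eq_bigr (fun _ => RR p.-1)); last first.
    by move=> j _; rewrite -!sE hs.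
  by rewrite sumr_const card_ord mulr_natl.
rewrite h2' => /eqP; rewrite eq_sym mulf_eq0 pnatr_eq0 => /orP [p0|/eqP R0].
  by move: p0; rewrite eqn0Ngt prime_gt0.
move=> i; rewrite rRR -sE hs ?Fp_lt // sE R0.
by [].
Qed.

End Cyc.
Lemma sum_option (T : finType) (g : option T -> algC) :
  \sum_k g k = g None + \sum_i g (Some i).
Proof.
rewrite (bigD1 None) //=; congr (_ + _).
rewrite (reindex_omap Some id) /=; last by case.
by apply: eq_bigl => i; rewrite eqxx.
Qed.

Section Concrete.
Variables (p : nat) (F : finFieldType) (m : nat).
Hypotheses (hp : prime p) (hchar : p \in [pchar F]) (hq : #|F| = (p ^ m)%N).
Variable f : F -> 'F_p.
Hypotheses (hf0 : f 0 = 0)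
  (hfhom : forall (a : 'F_p) (x : F), a != 0 -> f (((a : nat)%:R : F) * x) = f x).

Local Notation Tr := (abs_trace p (F := F) m).
Let TrD := Tr_add p F m hp hchar hq.
Let TrS := Tr_scal p F m hp hchar hq.
Let Tr0' := Tr0 p F m hp hchar hq.

Definition chiF (b x : F) : algC := ep p (- Tr (b * x)).
Definition clsF (x : F) : option 'F_p := if x == 0 then None else Some (f x).

Lemma chiF_D b x y : chiF b (x + y) = chiF b x * chiF b y.
Proof. by rewrite /chiF mulrDr TrD opprD (ep_add p hp). Qed.

Lemma chiF_C b x : chiF b x = chiF x b.
Proof. by rewrite /chiF mulrC. Qed.

Lemma chiF_0 b : chiF b 0 = 1.
Proof. by rewrite /chiF mulr0 Tr0' oppr0 ep0. Qed.

Lemma chiF_orth b : \sum_x chiF b x = if b == 0 then #|F|%:R else 0.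
Proof.
case: eqP => [->|/eqP nz].
  under eq_bigr do rewrite chiF_C chiF_0.
  by rewrite sumr_const; congr (_%:R); apply: eq_card.
have [y0 hy0] := Tr_nz p F m hp hchar hq.
set y := b^-1 * y0.
have hy : chiF b y != 1.
  by rewrite /chiF mulrA divff // mul1r (ep_eq1 p hp) oppr_eq0.
have e : \sum_x chiF b x = chiF b y * \sum_x chiF b x.
  rewrite [LHS](reindex_inj (addIr y)) /= mulr_sumr.
  by apply: eq_bigr => x _; rewrite chiF_D mulrC.
apply/eqP; move/eqP: e; rewrite -subr_eq0 -{1}(mul1r (\sum_x _)) -mulrBl mulf_eq0.
by rewrite subr_eq0 eq_sym (negbTE hy).
Qed.

Lemma clsF0 x : (clsF x == clsF 0) = (x == 0).
Proof. by rewrite /clsF eqxx; case: (x == 0). Qed.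

Local Notation JF := (J F _ clsF).
Local Notation SigsF := (Sigs F _ clsF chiF).
Local Notation lamF := (lamf F _ clsF chiF).
Local Notation NF := (Nf F _ clsF).
Local Notation SigF := (Sig F _ clsF chiF).

Definition main_abs := abstract_main F _ clsF chiF chiF_D chiF_C chiF_0 chiF_orth clsF0.


Lemma iota_nz (a : 'F_p) : a != 0 -> iotaF p F a != 0.
Proof.
move=> nz; apply: contra nz => /eqP h; apply/eqP.
by apply: (iota_inj p F hp hchar); rewrite h.
Qed.

Lemma clsF_scal (a : 'F_p) x : a != 0 -> clsF (iotaF p F a * x) = clsF x.
Proof.
move=> nz; rewrite /clsF mulf_eq0 (negbTE (iota_nz a nz)) /=.
by case: (x == 0) => //; rewrite hfhom.
Qed.

Lemma clsF_N x : clsF (- x) = clsF x.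
Proof.
rewrite /clsF oppr_eq0; case: (x == 0) => //; congr Some.
have e : (((((-1)%R : 'F_p)) : nat)%:R : F) = -1 := iotaN1 p F hp hchar.
have := hfhom ((-1)%R : 'F_p) x; rewrite e mulN1r; apply.
by rewrite oppr_eq0 oner_eq0.
Qed.

Lemma lamF_None b : lamF None b = 1.
Proof.
have -> : None = clsF 0 by rewrite /clsF eqxx.
exact: (lam_cls0 F _ clsF chiF chiF_0 clsF0).
Qed.

Lemma lam_rat i b : lamF (Some i) b \in Crat.
Proof.
set c := #|[pred a : 'F_p | a != 0]|.
have cnz : (c%:R : algC) != 0.
  by rewrite pnatr_eq0 -lt0n; apply/card_gt0P; exists 1; rewrite inE oner_eq0.
have key : c%:R * lamF (Some i) b =
    \sum_x (clsF x == Some i)%:R * (\sum_(a : 'F_p | a != 0) ep p (a * - Tr (b * x))).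
  transitivity (\sum_(a : 'F_p | a != 0) lamF (Some i) b).
    by rewrite sumr_const mulr_natl.
  transitivity (\sum_(a : 'F_p | a != 0) \sum_x (clsF x == Some i)%:R * ep p (a * - Tr (b * x))).
    apply: eq_bigr => a nz; rewrite /lamf (reindex_inj (mulfI (iota_nz a nz))) /=.
    apply: eq_bigr => x _; rewrite clsF_scal // /chiF mulrCA TrS mulrN.
    by [].
  rewrite exchange_big /=; apply: eq_bigr => x _; rewrite mulr_sumr.
  by [].
have inner x : \sum_(a : 'F_p | a != 0) ep p (a * - Tr (b * x)) \in Crat.
  set u := - Tr (b * x).
  have e : \sum_(a : 'F_p | a != 0) ep p (a * u) = \sum_a ep p (a * u) - 1.
    by rewrite [X in _ = X - _](bigD1 0) //= mul0r ep0 addrC addrK.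
  rewrite e; apply: rpredB; last exact: rpred1.
  case: (eqVneq u 0) => [->|nz]; last by rewrite sum_ep_mul // rpred0.
  under eq_bigr do rewrite mulr0 ep0.
  by rewrite sumr_const rpred_nat.
have -> : lamF (Some i) b = (c%:R)^-1 * (c%:R * lamF (Some i) b) by rewrite mulKf.
rewrite key; apply: rpredM; first by rewrite rpredV rpred_nat.
by apply: rpred_sum => x _; apply: rpredM; [apply: rpred_nat | apply: inner].
Qed.

Definition gW (s : {ffun option 'F_p -> algC}) : algC :=
  s None + \sum_i ep p i * s (Some i).

Lemma walshE b : walsh m f b = gW (SigF b).
Proof.
pose w k : algC := if k is Some i then ep p i else 1.
have e1 : walsh m f b = \sum_x w (clsF x) * chiF b x.
  rewrite /walsh; apply: eq_bigr => x _.
  rewrite -/(ep p _) (ep_add p hp) /chiF; congr (_ * _).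
  by rewrite /clsF /w; case: eqP => [->|//]; rewrite hf0 ep0.
have e2 : \sum_x w (clsF x) * chiF b x = \sum_k w k * lamF k b.
  rewrite /lamf; under [RHS]eq_bigr do rewrite mulr_sumr.
  rewrite exchange_big /=; apply: eq_bigr => x _.
  rewrite (bigD1 (clsF x)) //= eqxx mul1r big1 ?addr0 // => k /negbTE.
  by rewrite eq_sym => ->; rewrite mul0r mulr0.
rewrite e1 e2 sum_option /gW !ffunE /= mul1r; congr (_ + _).
by apply: eq_bigr => i _; rewrite ffunE.
Qed.

Lemma sum_SigF b : \sum_k SigF b k = if b == 0 then #|F|%:R else 0.
Proof.
rewrite -chiF_orth -(sum_lam F _ clsF chiF b).
by apply: eq_bigr => k _; rewrite ffunE.
Qed.

Lemma gW_inj b c : b != 0 -> c != 0 -> gW (SigF b) = gW (SigF c) -> SigF b = SigF c.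
Proof.
move=> bnz cnz e.
pose r i := lamF (Some i) b - lamF (Some i) c.
have rQ i : r i \in Crat by apply: rpredB; apply: lam_rat.
have sb : \sum_i lamF (Some i) b = -1.
  have := sum_SigF b; rewrite (negbTE bnz) sum_option !ffunE lamF_None.
  under eq_bigr do rewrite ffunE.
  by move/eqP; rewrite addrC addr_eq0 => /eqP.
have sc : \sum_i lamF (Some i) c = -1.
  have := sum_SigF c; rewrite (negbTE cnz) sum_option !ffunE lamF_None.
  under eq_bigr do rewrite ffunE.
  by move/eqP; rewrite addrC addr_eq0 => /eqP.
have h2 : \sum_i r i = 0 by rewrite /r GRing.sumrB sb sc subrr.
have h1 : \sum_i ep p i * r i = 0.
  move: e; rewrite /gW !ffunE !lamF_None => /addrI.
  under eq_bigr do rewrite ffunE.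
  under [X in _ = X -> _]eq_bigr do rewrite ffunE.
  move=> e; rewrite /r; under eq_bigr do rewrite mulrBr.
  by rewrite GRing.sumrB e subrr.
have r0 := cyc_Fp p hp r rQ h1 h2.
apply/ffunP => -[i|]; rewrite !ffunE; last by rewrite !lamF_None.
by apply/eqP; rewrite -subr_eq0; apply/eqP; exact: r0.
Qed.

Lemma SigF0 b : b != 0 -> SigF 0 != SigF b.
Proof.
move=> nz; apply/eqP => e.
have h0 := sum_SigF 0; rewrite eqxx e sum_SigF (negbTE nz) in h0.
move/eqP: h0; rewrite eq_sym pnatr_eq0 => /eqP h0.
by move: (card_finNzRing_gt1 F); rewrite h0.
Qed.

Lemma undup_map_in (T1 T2 : eqType) (g : T1 -> T2) (s : seq T1) :
  {in s &, injective g} -> size (undup (map g s)) = size (undup s).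
Proof.
elim: s => [//|x s IH] ginj /=.
have ginj' : {in s &, injective g}.
  by move=> y z ys zs; apply: ginj; rewrite inE ?ys ?zs orbT.
have -> : (g x \in map g s) = (x \in s).
  apply/mapP/idP => [[y ys gy]|xs]; last by exists x.
  by rewrite (ginj x y) ?inE ?eqxx ?ys ?orbT.
by case: (x \in s) => //=; rewrite IH.
Qed.

Lemma size_SigsF :
  size SigsF = (size (undup [seq walsh m f b | b <- enum F & b != 0])).+1.
Proof.
set L := [seq b <- enum F | b != 0].
have -> : [seq walsh m f b | b <- enum F & b != 0] = map gW (map SigF L).
  by rewrite -map_comp; apply: eq_map => b; rewrite /= walshE.
rewrite [in RHS]undup_map_in; last first.
  move=> s1 s2 /mapP [b bL ->] /mapP [c cL ->].
  move: bL cL; rewrite /L !mem_filter => /andP [bnz _] /andP [cnz _].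
  exact: (gW_inj b c bnz cnz).
have eL : enum F =i 0 :: L.
  move=> x; have h : forall y : F, y \in enum F by move=> y; rewrite mem_enum.
  by rewrite h inE /L mem_filter h andbT; case: eqP.
have := perm_undup (eq_mem_map SigF eL); move/perm_size; rewrite /Sigs => ->.
rewrite /=.
have -> : (SigF 0 \in [seq SigF b | b <- L]) = false.
  apply/negP => /mapP [b bL e]; move: bL; rewrite /L mem_filter => /andP [nz _].
  by move: (SigF0 b nz); rewrite e eqxx.
by [].
Qed.

Lemma sidx : scheme_index f = JF.
Proof.
apply/setP => -[i|]; rewrite /scheme_index !inE /=.
  rewrite (mem_imset _ _ (@Some_inj _)) /image_set.
  apply/imsetP/imsetP => [[x]|[x _ e]].
    by rewrite inE => nz ->; exists x => //; rewrite /clsF (negbTE nz).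
  move: e; rewrite /clsF; case: eqP => // /eqP nz [->].
  by exists x => //; rewrite inE.
by apply/esym/imsetP; exists 0 => //; rewrite /clsF eqxx.
Qed.

Lemma card_JF : #|JF| = (#|image_set f|).+1.
Proof.
rewrite -sidx /scheme_index cardsU1 card_imset; last exact: Some_inj.
have -> : (None \notin [set Some i | i in image_set f]) by apply/imsetP => -[].
by [].
Qed.

Lemma relE k a b : scheme_rel f k a b = (clsF (a - b) == k).
Proof.
case: k => [i|] /=; rewrite /clsF.
  by case: (a - b == 0).
by rewrite subr_eq0; case: (a == b).
Qed.

Lemma card_sum (P : pred F) : (#|[set w | P w]|%:R : algC) = \sum_w (P w)%:R.
Proof.
rewrite -sum1_card natr_sum big_mkcond /=; apply: eq_bigr => w _.
by rewrite inE; case: (P w).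
Qed.

Lemma NF_card a b u v :
  (#|[set w | scheme_rel f a u w && scheme_rel f b w v]|%:R : algC) = NF a b (u - v).
Proof.
rewrite card_sum /Nf (reindex_inj (addIr v)) /=; apply: eq_bigr => w _.
rewrite !relE addrK.
have -> : u - (w + v) = u - v - w by rewrite opprD addrA addrAC.
by [].
Qed.

Lemma scheme_iff :
  is_sym_assoc_scheme (scheme_index f) (scheme_rel f) <->
  (forall a b, a \in JF -> b \in JF -> forall z z', clsF z = clsF z' -> NF a b z = NF a b z').
Proof.
rewrite sidx; split.
  case => _ _ _ _ h5 a b aJ bJ z z' e.
  have cJ : clsF z \in JF by apply: imset_f.
  have [n hn] := h5 a b (clsF z) aJ bJ cJ.
  have Nc y : clsF y = clsF z -> NF a b y = n%:R.
    move=> ey; rewrite -(hn y 0); last by rewrite relE subr0 ey.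
    by rewrite NF_card subr0.
  by rewrite Nc // Nc.
move=> h5; split.
- move=> x y; exists (clsF (x - y)); split; first exact: imset_f.
    by rewrite relE.
  by move=> k' _; rewrite relE => /eqP.
- exists None; last by [].
  by apply/imsetP; exists 0 => //; rewrite /clsF eqxx.
- by move=> k /imsetP [z _ ->]; exists z, 0; rewrite relE subr0.
- by move=> k _ x y; rewrite !relE -opprB clsF_N.
- move=> a b c aJ bJ /imsetP [z0 _ ->].
  exists #|[set w | scheme_rel f a z0 w && scheme_rel f b w 0]| => u v.
  rewrite relE => /eqP huv.
  apply/eqP; rewrite -(eqC_nat); apply/eqP; rewrite !NF_card subr0.
  exact: h5.
Qed.

Theorem final_concrete :
  is_sym_assoc_scheme (scheme_index f) (scheme_rel f)
  <-> #|image_set f| = size (undup [seq walsh m f b | b <- enum F & b != 0]).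
Proof.
rewrite scheme_iff main_abs size_SigsF card_JF.
by split => h; lia.
Qed.

End Concrete.

Theorem corollary4p5 (p : nat) (F : finFieldType) (m : nat)
  (hp : prime p) (hchar : p \in [pchar F]) (hq : #|F| = (p ^ m)%N)
  (f : F -> 'F_p)
  (hf0 : f 0 = 0)
  (hfhom : forall (a : 'F_p) (x : F), a != 0 -> f (((a : nat)%:R : F) * x) = f x) :
  is_sym_assoc_scheme (scheme_index f) (scheme_rel f)
  <-> #|image_set f| = size (undup [seq walsh m f b | b <- enum F & b != 0]).
Proof. exact: final_concrete. Qed.
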